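(* Let $F$, $H$, $X$, $\Omega$, $Q$ and the sequences generated by the IneIREG method be as described in the context, suppose $H$ is $\mu$-strongly monotone for some $\mu>0$, and suppose $0<\lambda_k<1/L_k$ for all $k\ge0$, where $L_k:=L_F+\eta_kL_H$. Let $\beta_k:=\big(\frac{1}{1-\lambda_k^2L_k^2}+\frac{1}{2\lambda_k\eta_k\mu}\big)^{-1}$. Then for all $x\in X$ and $k\ge0$, $$(1-\beta_k)\|w_k-x\|^2-\|x_{k+1}-x\|^2\ge2\lambda_k\langle F(x),y_k-x\rangle+2\lambda_k\eta_k\langle H(x),y_k-x\rangle.$$
   Context: Work in $\mathbb{R}^n$ with Euclidean inner product $\langle\cdot,\cdot\rangle$ and norm $\|\cdot\|$. The maps $F\colon \mathrm{Dom}\,F\to\mathbb{R}^n$ and $H\colon\mathrm{Dom}\,H\to\mathbb{R}^n$ are monotone and Lipschitz continuous with constants $L_F>0$ and $L_H>0$; $H$ is $\mu$-strongly monotone means $\langle H(x)-H(y),x-y\rangle\ge\mu\|x-y\|^2$ for all $x,y\in\mathrm{Dom}\,H$. $X$ is a nonempty compact convex set and $\Omega$ a nonempty closed convex set with $X\subset\Omega\subset\mathrm{Dom}\,F\cap\mathrm{Dom}\,H$; $P_X,P_\Omega$ denote orthogonal projections. $Q:=\{x\in X:\langle F(x),y-x\rangle\ge0\ \forall y\in X\}$ is assumed nonempty. IneIREG method: start with $x_0=x_{-1}\in X$; for $k=0,1,\dots$, with parameters $\alpha_k\ge0$, $\lambda_k>0$, $\eta_k>0$, set $w_k=x_k+\alpha_k(x_k-x_{k-1})$,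 $w'_k=P_\Omega(w_k)$, $y_k=P_X\big(w_k-\lambda_k(F(w'_k)+\eta_kH(w'_k))\big)$, $x_{k+1}=P_X\big(w_k-\lambda_k(F(y_k)+\eta_kH(y_k))\big)$. *)

(* Defs.v *)
From HB Require Import structures.
From mathcomp Require Import all_boot all_order all_algebra.
From mathcomp Require Import all_classical all_reals all_analysis.
Set Implicit Arguments. Unset Strict Implicit. Unset Printing Implicit Defensive.
Import Order.TTheory GRing.Theory Num.Theory.
Local Open Scope ring_scope.
Local Open Scope classical_set_scope.

Section Defs.
Variables (R : realType) (n : nat).
Notation V := 'rV[R]_n.

Definition dotp (u v : V) : R := \sum_(i < n) u ord0 i * v ord0 i.
Definition enorm (u : V) : R := Num.sqrt (dotp u u).

Definition vconvex_set (C : set V) : Prop :=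
  forall x y, C x -> C y -> forall t : R, 0 <= t -> t <= 1 ->
    C (t *: x + (1 - t) *: y).

Definition is_projection (C : set V) (x p : V) : Prop :=
  C p /\ forall y, C y -> enorm (x - p) <= enorm (x - y).

Definition vmonotone_on (D : set V) (F : V -> V) : Prop :=
  forall x y, D x -> D y -> 0 <= dotp (F x - F y) (x - y).

Definition vstrongly_monotone_on (D : set V) (F : V -> V) (mu : R) : Prop :=
  forall x y, D x -> D y -> mu * enorm (x - y) ^+ 2 <= dotp (F x - F y) (x - y).

Definition vlipschitz_on (D : set V) (F : V -> V) (L : R) : Prop :=
  forall x y, D x -> D y -> enorm (F x - F y) <= L * enorm (x - y).

Definition VIsol (X : set V) (F : V -> V) : set V :=
  [set x | X x /\ forall y, X y -> 0 <= dotp (F x) (y - x)].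

(* x_{k-1}, with the convention x_{-1} = x_0 *)
Definition prev_iter (x : nat -> V) (k : nat) : V :=
  if k is k'.+1 then x k' else x 0%N.

End Defs.

(* Main.v *)
Require Import Defs.
From HB Require Import structures.
From mathcomp Require Import all_boot all_order all_algebra.
From mathcomp Require Import all_classical all_reals all_analysis.
From mathcomp Require Import ring lra.
Import Order.TTheory GRing.Theory Num.Theory.
Import numFieldTopology.Exports numFieldNormedType.Exports.
Local Open Scope ring_scope.
Local Open Scope classical_set_scope.
Section H.
Context {R : realType} {n : nat}.
Notation V := 'rV[R]_n.
Notation D := (@dotp R n).
Notation N u := (@dotp R n u u).

Lemma dotpC (u v : V) : D u v = D v u.
Proof. by apply: eq_bigr => i _; rewrite mulrC. Qed.
Lemma dotpDl (u v t : V) : D (u + v) t = D u t + D v t.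
Proof. rewrite /dotp -big_split; apply: eq_bigr => i _; by rewrite mxE mulrDl. Qed.
Lemma dotpZl a (u t : V) : D (a *: u) t = a * D u t.
Proof. rewrite /dotp mulr_sumr; apply: eq_bigr => i _; by rewrite mxE mulrA. Qed.
Lemma dotpNl (u t : V) : D (- u) t = - D u t.
Proof. by rewrite -scaleN1r dotpZl mulN1r. Qed.
Lemma dotpBl (u v t : V) : D (u - v) t = D u t - D v t.
Proof. by rewrite dotpDl dotpNl. Qed.
Lemma dotpDr (u v t : V) : D t (u + v) = D t u + D t v.
Proof. by rewrite dotpC dotpDl !(dotpC t). Qed.
Lemma dotpZr a (u t : V) : D t (a *: u) = a * D t u.
Proof. by rewrite dotpC dotpZl dotpC. Qed.
Lemma dotpNr (u t : V) : D t (- u) = - D t u.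
Proof. by rewrite dotpC dotpNl dotpC. Qed.
Lemma dotpBr (u v t : V) : D t (u - v) = D t u - D t v.
Proof. by rewrite dotpDr dotpNr. Qed.
Lemma dotp_ge0 (u : V) : 0 <= N u.
Proof. by apply: sumr_ge0 => i _; rewrite -expr2 sqr_ge0. Qed.
Lemma enorm_sq (u : V) : enorm u ^+ 2 = N u.
Proof. by rewrite /enorm sqr_sqrtr // dotp_ge0. Qed.
Lemma enorm_ge0 (u : V) : 0 <= enorm u.
Proof. exact: sqrtr_ge0. Qed.
Lemma normD (u v : V) : N (u + v) = N u + 2 * D u v + N v.
Proof. rewrite dotpDl !dotpDr (dotpC v u); ring. Qed.
Lemma normB (u v : V) : N (u - v) = N u - 2 * D u v + N v.
Proof. rewrite normD dotpNr dotpNl dotpNr opprK; ring. Qed.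
Lemma normZ a (u : V) : N (a *: u) = a ^+ 2 * N u.
Proof. rewrite dotpZl dotpZr; ring. Qed.

Lemma young (u v : V) c : 0 < c -> 2 * D u v <= c * N u + c^-1 * N v.
Proof.
move=> c0; have := dotp_ge0 (c *: u - v); rewrite normB normZ dotpZl => h.
have h2 : c * (2 * D u v) <= c * (c * N u + c^-1 * N v).
  rewrite mulrDr mulrA mulrA (mulrA c) divff ?gt_eqF // mul1r -expr2; lra.
by rewrite -(ler_pM2l c0).
Qed.

Lemma proj_char (C : set V) (x p v : V) :
  vconvex_set C -> is_projection C x p -> C v -> D (x - p) (v - p) <= 0.
Proof.
move=> cv [Cp pm] Cv; rewrite leNgt; apply/negP => c0.
set c := D (x - p) (v - p) in c0 *; set q := N (v - p).
have q0 : 0 <= q by exact: dotp_ge0.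
set t := c / (c + q).
have cq : 0 < c + q by lra.
have t0 : 0 <= t by rewrite divr_ge0 // ltW.
have t1 : t <= 1 by rewrite ler_pdivrMr // mul1r; lra.
have := pm _ (cv v p Cv Cp t t0 t1).
have -> : x - (t *: v + (1 - t) *: p) = (x - p) - t *: (v - p).
  by apply/rowP => i; rewrite !mxE; ring.
move=> h.
have h2 : enorm (x - p) ^+ 2 <= enorm (x - p - t *: (v - p)) ^+ 2.
  by rewrite ler_pXn2r // ?nnegrE ?enorm_ge0.
rewrite !enorm_sq (normB (x - p)) normZ dotpZr -/c -/q in h2.
have e : t * (c + q) = c by rewrite /t mulfVK // gt_eqF.
have : 2 * t * c <= t ^+ 2 * q by lra.
have tp : 0 < t by rewrite divr_gt0.
move=> h3.
have h4 : 2 * c <= t * q.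
  by rewrite -(ler_pM2l tp); rewrite expr2 in h3; lra.
have h5 : t * q <= t * (c + q) by rewrite ler_pM2l //; lra.
lra.
Qed.
End H.
Local Notation D := dotp.
Local Notation N u := (dotp u u).

Theorem corollary4p5 (R : realType) (n : nat)
  (DomF DomH X Omega : set 'rV[R]_n) (F H : 'rV[R]_n -> 'rV[R]_n)
  (LF LH mu : R) (PX POm : 'rV[R]_n -> 'rV[R]_n)
  (alpha lambda eta : nat -> R) (x w w' y : nat -> 'rV[R]_n) :
  0 < LF -> 0 < LH ->
  vmonotone_on DomF F -> vlipschitz_on DomF F LF ->
  vmonotone_on DomH H -> vlipschitz_on DomH H LH ->
  0 < mu -> vstrongly_monotone_on DomH H mu ->
  X !=set0 -> compact X -> vconvex_set X ->
  Omega !=set0 -> closed Omega -> vconvex_set Omega ->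
  X `<=` Omega -> Omega `<=` DomF `&` DomH ->
  VIsol X F !=set0 ->
  (forall z, is_projection X z (PX z)) ->
  (forall z, is_projection Omega z (POm z)) ->
  (forall k, 0 <= alpha k) -> (forall k, 0 < lambda k) -> (forall k, 0 < eta k) ->
  (forall k, lambda k < 1 / (LF + eta k * LH)) ->
  X (x 0%N) ->
  (forall k, w k = x k + alpha k *: (x k - prev_iter x k)) ->
  (forall k, w' k = POm (w k)) ->
  (forall k, y k = PX (w k - lambda k *: (F (w' k) + eta k *: H (w' k)))) ->
  (forall k, x k.+1 = PX (w k - lambda k *: (F (y k) + eta k *: H (y k)))) ->
  forall (z : 'rV[R]_n) (k : nat), X z ->
    let Lk := LF + eta k * LH in
    let betak := (1 / (1 - lambda k ^+ 2 * Lk ^+ 2)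
                  + 1 / (2 * lambda k * eta k * mu))^-1 in
    (1 - betak) * enorm (w k - z) ^+ 2 - enorm (x k.+1 - z) ^+ 2
      >= 2 * lambda k * dotp (F z) (y k - z)
         + 2 * lambda k * eta k * dotp (H z) (y k - z).
Proof.
Proof.
move=> hLF hLH monF lipF monH lipH hmu smonH _ _ convX _ _ convO XO OD _ prX prO
  _ hlam heta hlamL _ hw hw' hy hx z k Xz; rewrite /=.
set Lk := LF + eta k * LH.
set betak := (1 / (1 - lambda k ^+ 2 * Lk ^+ 2) + 1 / (2 * lambda k * eta k * mu))^-1.
set W := w k; set Y := y k; set Xp := x k.+1; set W' := w' k.
set lam := lambda k; set et := eta k.
have lam0 : 0 < lam := hlam k.
have et0 : 0 < et := heta k.
have Lk0 : 0 < Lk by rewrite /Lk; apply: addr_gt0 => //; apply: mulr_gt0.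
have lamL : lam * Lk < 1.
  by have := hlamL k; rewrite -/lam -/Lk ltr_pdivlMr.
set G := fun v => F v + et *: H v.
have XY : X Y by rewrite /Y hy; case: (prX (W - lambda k *: (F (w' k) + eta k *: H (w' k)))).
have XXp : X Xp by rewrite /Xp hx; case: (prX (W - lambda k *: (F (y k) + eta k *: H (y k)))).
have OW' : Omega W' by rewrite /W' hw'; case: (prO W).
have [DFY DHY] := OD _ (XO _ XY).
have [DFz DHz] := OD _ (XO _ Xz).
have [DFW' DHW'] := OD _ OW'.
have f1 : N (W - z) = N (W - Xp) + 2 * D (W - Xp) (Xp - z) + N (Xp - z).
  have -> : W - z = (W - Xp) + (Xp - z) by apply/rowP => i; rewrite !mxE; ring.
  exact: normD.
have f2 : lam * D (G Y) (Xp - z) <= D (W - Xp) (Xp - z).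
  have := proj_char _ _ _ _ convX (prX (W - lam *: G Y)) Xz.
  rewrite -hx -/Xp.
  have -> : W - lam *: G Y - Xp = (W - Xp) - lam *: G Y by apply/rowP => i; rewrite !mxE; ring.
  have -> : z - Xp = - (Xp - z) by apply/rowP => i; rewrite !mxE; ring.
  move=> h; rewrite dotpBl dotpZl !dotpNr in h; lra.
have f3 : D (G Y) (Xp - z) = D (G Y) (Y - z) - D (G Y) (Y - Xp).
  rewrite -dotpBr; congr dotp; apply/rowP => i; rewrite !mxE; ring.
have f4 : N (W - Xp) = N (W - Y) + 2 * D (W - Y) (Y - Xp) + N (Y - Xp).
  have -> : W - Xp = (W - Y) + (Y - Xp) by apply/rowP => i; rewrite !mxE; ring.
  exact: normD.
have f5 : lam * D (G W') (Y - Xp) <= D (W - Y) (Y - Xp).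
  have := proj_char _ _ _ _ convX (prX (W - lam *: G W')) XXp.
  rewrite -hy -/Y.
  have -> : W - lam *: G W' - Y = (W - Y) - lam *: G W' by apply/rowP => i; rewrite !mxE; ring.
  have -> : Xp - Y = - (Y - Xp) by apply/rowP => i; rewrite !mxE; ring.
  move=> h; rewrite dotpBl dotpZl !dotpNr in h; lra.
have f6 : D (G Y) (Y - Xp) - D (G W') (Y - Xp)
    = D (F Y - F W') (Y - Xp) + et * D (H Y - H W') (Y - Xp).
  rewrite -dotpBl -dotpZl -dotpDl; congr dotp; apply/rowP => i; rewrite !mxE; ring.
have c1 : 0 < lam * Lk / LF by rewrite divr_gt0 // mulr_gt0.
have c2 : 0 < lam * Lk / LH by rewrite divr_gt0 // mulr_gt0.
have f7 := young (F Y - F W') (Y - Xp) (lam * Lk / LF) c1.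
have f8 := young (H Y - H W') (Y - Xp) (lam * Lk / LH) c2.
have sq : forall (a b : 'rV[R]_n) (c : R), 0 <= c -> enorm a <= c * enorm b -> N a <= c ^+ 2 * N b.
  move=> a b c c0 hab; rewrite -!enorm_sq -exprMn ler_pXn2r // ?nnegrE ?enorm_ge0 //.
  by rewrite mulr_ge0 // enorm_ge0.
have f9 : N (F Y - F W') <= LF ^+ 2 * N (Y - W') by apply: sq; [lra| exact: lipF].
have f9' : N (H Y - H W') <= LH ^+ 2 * N (Y - W') by apply: sq; [lra| exact: lipH].
have f10 : N (Y - W') <= N (W - Y).
  have := proj_char _ _ _ _ convO (prO W) (XO _ XY); rewrite -hw' -/W' => h.
  have -> : W - Y = (W - W') - (Y - W') by apply/rowP => i; rewrite !mxE; ring.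
  rewrite (normB (W - W')); have := dotp_ge0 (W - W'); lra.
have f11 : D (F z) (Y - z) + et * D (H z) (Y - z) + et * mu * N (Y - z) <= D (G Y) (Y - z).
  have m1 := monF _ _ DFY DFz.
  have m2 := smonH _ _ DHY DHz; rewrite enorm_sq in m2.
  rewrite /G /= (dotpDl (F Y)) dotpZl; rewrite (dotpBl (F Y)) in m1; rewrite (dotpBl (H Y)) in m2.
  have : et * (mu * N (Y - z)) <= et * (D (H Y) (Y - z) - D (H z) (Y - z)).
    by rewrite ler_pM2l.
  lra.
have NB0 := dotp_ge0 (Y - Xp).
have NE0 := dotp_ge0 (Y - W').
have N10 := dotp_ge0 (W - Y).
have N20 := dotp_ge0 (Y - z).
have LF0 : LF != 0 by rewrite gt_eqF.
have LH0 : LH != 0 by rewrite gt_eqF.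
have Lk0' : Lk != 0 by rewrite gt_eqF.
have lam0' : lam != 0 by rewrite gt_eqF.
have et0' : et != 0 by rewrite gt_eqF.
have mu0' : mu != 0 by rewrite gt_eqF.
have sA : N (Xp - z) <= N (W - z) - N (W - Xp) - 2 * (lam * D (G Y) (Y - z))
    + 2 * (lam * D (G Y) (Y - Xp)).
  have e : lam * D (G Y) (Xp - z) = lam * D (G Y) (Y - z) - lam * D (G Y) (Y - Xp)
    by rewrite f3; ring.
  lra.
have sB : N (W - Y) + N (Y - Xp) + 2 * (lam * D (G W') (Y - Xp)) <= N (W - Xp) by lra.
have sC : lam * D (G Y) (Y - Xp) - lam * D (G W') (Y - Xp)
    = lam * D (F Y - F W') (Y - Xp) + lam * et * D (H Y - H W') (Y - Xp).
  by rewrite -mulrBr f6; ring.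
have sD : 2 * (lam * D (F Y - F W') (Y - Xp)) <=
    lam ^+ 2 * Lk * LF * N (Y - W') + LF / Lk * N (Y - Xp).
  have h1 := ler_wpM2l (ltW lam0) f7.
  have e : lam * (lam * Lk / LF * N (F Y - F W') + (lam * Lk / LF)^-1 * N (Y - Xp))
     = (lam ^+ 2 * Lk / LF) * N (F Y - F W') + LF / Lk * N (Y - Xp) by field; rewrite ?Lk0' ?LF0 ?LH0 ?lam0' ?et0' ?mu0'.
  have h2 : (lam ^+ 2 * Lk / LF) * N (F Y - F W') <= (lam ^+ 2 * Lk / LF) * (LF ^+ 2 * N (Y - W')).
    by rewrite ler_wpM2l // divr_ge0 // ?mulr_ge0 ?exprn_ge0 // ltW.
  have e2 : (lam ^+ 2 * Lk / LF) * (LF ^+ 2 * N (Y - W')) = lam ^+ 2 * Lk * LF * N (Y - W') by field; rewrite ?Lk0' ?LF0 ?LH0 ?lam0' ?et0' ?mu0'.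
  lra.
have sE : 2 * (lam * et * D (H Y - H W') (Y - Xp)) <=
    lam ^+ 2 * Lk * et * LH * N (Y - W') + et * LH / Lk * N (Y - Xp).
  have h1 := ler_wpM2l (ltW (mulr_gt0 lam0 et0)) f8.
  have e : lam * et * (lam * Lk / LH * N (H Y - H W') + (lam * Lk / LH)^-1 * N (Y - Xp))
     = (lam ^+ 2 * et * Lk / LH) * N (H Y - H W') + et * LH / Lk * N (Y - Xp) by field; rewrite ?Lk0' ?LF0 ?LH0 ?lam0' ?et0' ?mu0'.
  have h2 : (lam ^+ 2 * et * Lk / LH) * N (H Y - H W') <= (lam ^+ 2 * et * Lk / LH) * (LH ^+ 2 * N (Y - W')).
    by rewrite ler_wpM2l // divr_ge0 // ?mulr_ge0 ?exprn_ge0 // ltW.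
  have e2 : (lam ^+ 2 * et * Lk / LH) * (LH ^+ 2 * N (Y - W')) = lam ^+ 2 * Lk * et * LH * N (Y - W') by field; rewrite ?Lk0' ?LF0 ?LH0 ?lam0' ?et0' ?mu0'.
  lra.
have sDE : 2 * (lam * D (G Y) (Y - Xp) - lam * D (G W') (Y - Xp))
    <= lam ^+ 2 * Lk ^+ 2 * N (W - Y) + N (Y - Xp).
  have e : lam ^+ 2 * Lk * LF * N (Y - W') + LF / Lk * N (Y - Xp)
      + (lam ^+ 2 * Lk * et * LH * N (Y - W') + et * LH / Lk * N (Y - Xp))
      = lam ^+ 2 * Lk ^+ 2 * N (Y - W') + N (Y - Xp) 
    by have eL2 : Lk = LF + et * LH by []; move: Lk0'; rewrite eL2 => Lk0''; field; rewrite ?Lk0''.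
  have h : lam ^+ 2 * Lk ^+ 2 * N (Y - W') <= lam ^+ 2 * Lk ^+ 2 * N (W - Y).
    by rewrite ler_wpM2l // mulr_ge0 // exprn_ge0 // ltW.
  lra.
have sG : lam * D (F z) (Y - z) + lam * et * D (H z) (Y - z) + lam * et * mu * N (Y - z)
    <= lam * D (G Y) (Y - z).
  have := ler_wpM2l (ltW lam0) f11; rewrite !mulrDr !mulrA; done.
set a := 1 - lam ^+ 2 * Lk ^+ 2.
set b := 2 * lam * et * mu.
have a0 : 0 < a.
  rewrite /a subr_gt0 -exprMn expr_lt1 // mulr_ge0 // ltW //.
have b0 : 0 < b by rewrite /b !mulr_gt0.
have a0' : a != 0 by rewrite gt_eqF.
have b0' : b != 0 by rewrite gt_eqF.
have sH : betak * N (W - z) <= a * N (W - Y) + b * N (Y - z).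
  have hyg := young (W - Y) (Y - z) (a / b) (divr_gt0 a0 b0).
  have e0 : W - z = (W - Y) + (Y - z) by apply/rowP => i; rewrite !mxE; ring.
  have hn : N (W - z) <= (1 + a / b) * N (W - Y) + (1 + (a / b)^-1) * N (Y - z).
    rewrite e0 normD; lra.
  have bt0 : 0 <= betak by rewrite /betak invr_ge0 addr_ge0 // divr_ge0 // ltW.
  have := ler_wpM2l bt0 hn.
  have -> : betak * ((1 + a / b) * N (W - Y) + (1 + (a / b)^-1) * N (Y - z))
      = a * N (W - Y) + b * N (Y - z).
    have eb : betak = (1 / a + 1 / b)^-1 by [].
    have s0 : 1 / a + 1 / b != 0 by rewrite gt_eqF // addr_gt0 // divr_gt0.
    have ba : b + a != 0 by rewrite gt_eqF // addr_gt0.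
    by rewrite eb; field; rewrite ?ba ?s0 ?a0' ?b0' ?Lk0' ?LF0 ?LH0 ?lam0' ?et0' ?mu0'.
  done.
have ea : a = 1 - lam ^+ 2 * Lk ^+ 2 by [].
have eb : b = 2 * lam * et * mu by [].
move: sH; rewrite ea eb => sH.
rewrite !enorm_sq.
lra.
Qed.
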